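(* Consider the liquid democracy game with complete information about types. Let $n_A,n_B$ be the numbers of partisans for $A$ and for $B$, $n_e$ the number of independent voters with precision $q_i=1$, and $n_U$ the number of independent voters with precision $q_i<1$. Suppose $n_e\ge 1$, $n_U\ge n_e+|n_A-n_B|+1$, and $\max(n_e+n_A,\ n_e+n_B)\le N/2$. Then the election game with delegation is dominance solvable (by iterated elimination of weakly dominated strategies), and the dominance-solvable outcome is the efficient outcome.
   Context: Voters $\mathcal N=\{1,\dots,N\}$ choose between alternatives $A$ and $B$ by simple majority of votes cast, ties broken uniformly at random. Unknown state $\omega\in\{a,b\}$ with common prior $\Pr(\omega=a)=\pi\in(0,1)$. Each voter $i$ has preference $p_i\in\{A,B,I\}$ and precision $q_i\in[1/2,1]$, commonly known. An independent ($p_i=I$) gets payoff 1 if the outcome matches the state ($A$ with $a$, $B$ with $b$), else 0; a partisan with $p_i=A$ (resp. $B$) gets 1 iff the outcome is $A$ (resp. $B$). Voter $i$ observes a private signal $s_i\in\{a,b\}$ with $\Pr(s_i=\omega\mid\omega)=q_i$, conditionally independent. In liquid democracy a (pure) strategy of voter $i$ maps her signal to one of: vote for $A$, vote for $B$, abstain, or delegate to another voter $j$; delegation is transitive, votes held by voters in a delegation cycle are abstained, and a non-delegating voter casts all votes she holds (own plus delegated) for the same alternative or abstains them all. The efficient outcome is the one maximizing the probability that the election outcome matches the state. *)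

(* Defs.v *)
From mathcomp Require Import all_boot all_order all_algebra.
Set Implicit Arguments. Unset Strict Implicit. Unset Printing Implicit Defensive.
Import Order.TTheory GRing.Theory Num.Theory.
Local Open Scope ring_scope.

(* Voter preferences: partisan for A, partisan for B, independent. *)
Inductive pref := PA | PB | PI.

(* Actions of a voter among N voters:
   inl (Some true)  = vote for A,
   inl (Some false) = vote for B,
   inl None         = abstain,
   inr j            = delegate to voter j. *)
Definition action (N : nat) := (option bool + 'I_N)%type.

(* Signals / states are booleans: true = a, false = b.
   A pure strategy maps the private signal to an action. *)
Definition strat (N : nat) := {ffun bool -> action N}.

Definition valid_strat (N : nat) (i : 'I_N) (x : strat N) : Prop :=
  forall (s : bool) (j : 'I_N), x s = inr j -> j != i.

(* After N steps along the delegation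
   chain from i, either we reached a non-delegating voter (who casts all the
   votes she holds), or we are still delegating, i.e. in a cycle (abstained). *)
Definition dnext (N : nat) (act : 'I_N -> action N) (j : 'I_N) : 'I_N :=
  match act j with inr k => k | inl _ => j end.

Definition final_vote (N : nat) (act : 'I_N -> action N) (i : 'I_N) : option bool :=
  match act (iter N (dnext act) i) with inl v => v | inr _ => None end.

Definition votesA (N : nat) (act : 'I_N -> action N) : nat :=
  #|[pred i | final_vote act i == Some true]|.
Definition votesB (N : nat) (act : 'I_N -> action N) : nat :=
  #|[pred i | final_vote act i == Some false]|.

(* Probability that the outcome is A: simple majority of votes cast,
   ties broken uniformly at random. *)
Definition probA (R : realFieldType) (N : nat) (act : 'I_N -> action N) : R :=
  if (votesB act < votesA act)%N then 1
  else if votesA act == votesB act then 2^-1 else 0.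

Definition profile (N : nat) := 'I_N -> strat N.

Definition act_of (N : nat) (sigma : profile N) (s : {ffun 'I_N -> bool}) :
  'I_N -> action N := fun i => sigma i (s i).

Definition prior (R : realFieldType) (pi : R) (w : bool) : R :=
  if w then pi else 1 - pi.

Definition sig_prob (R : realFieldType) (N : nat) (q : 'I_N -> R) (w : bool)
  (s : {ffun 'I_N -> bool}) : R :=
  \prod_(i < N) (if s i == w then q i else 1 - q i).

Definition utility (R : realFieldType) (x : pref) (w : bool) (pA : R) : R :=
  match x with
  | PA => pA
  | PB => 1 - pA
  | PI => if w then pA else 1 - pA
  end.

Definition expected (R : realFieldType) (N : nat) (pi : R) (q : 'I_N -> R)
  (u : bool -> R -> R) (sigma : profile N) : R :=
  \sum_(w : bool) \sum_(s : {ffun 'I_N -> bool})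
     prior pi w * sig_prob q w s * u w (probA R (act_of sigma s)).

Definition EU (R : realFieldType) (N : nat) (pi : R) (p : 'I_N -> pref)
  (q : 'I_N -> R) (i : 'I_N) (sigma : profile N) : R :=
  expected pi q (utility (p i)) sigma.

Definition prcorrect (R : realFieldType) (N : nat) (pi : R) (q : 'I_N -> R)
  (sigma : profile N) : R :=
  expected pi q (utility PI) sigma.

Definition upd (N : nat) (sigma : profile N) (i : 'I_N) (y : strat N) : profile N :=
  fun j => if j == i then y else sigma j.

(* A restriction of the game: a set of remaining strategies per voter. *)
Definition restr (N : nat) := 'I_N -> strat N -> Prop.

Definition in_restr (N : nat) (S : restr N) (sigma : profile N) : Prop :=
  forall j, S j (sigma j).

Definition wdominated (R : realFieldType) (N : nat) (pi : R) (p : 'I_N -> pref)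
  (q : 'I_N -> R) (S : restr N) (i : 'I_N) (x : strat N) : Prop :=
  exists y, S i y /\
    (forall sigma, in_restr S sigma ->
        EU pi p q i (upd sigma i x) <= EU pi p q i (upd sigma i y)) /\
    (exists sigma, in_restr S sigma /\
        EU pi p q i (upd sigma i x) < EU pi p q i (upd sigma i y)).

Definition elim_step (R : realFieldType) (N : nat) (pi : R) (p : 'I_N -> pref)
  (q : 'I_N -> R) (S : restr N) : restr N :=
  fun i x => S i x /\ ~ wdominated pi p q S i x.

Definition valid_restr (N : nat) : restr N := fun i x => valid_strat i x.

Definition surviving (R : realFieldType) (N : nat) (pi : R) (p : 'I_N -> pref)
  (q : 'I_N -> R) : restr N :=
  fun i x => forall k, iter k (elim_step pi p q) (@valid_restr N) i x.

(* Dominance solvability (Moulin): the surviving set is nonempty and every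
   player is indifferent among all surviving profiles. *)
Definition dominance_solvable (R : realFieldType) (N : nat) (pi : R)
  (p : 'I_N -> pref) (q : 'I_N -> R) : Prop :=
  (exists sigma, in_restr (surviving pi p q) sigma) /\
  (forall i sigma tau, in_restr (surviving pi p q) sigma ->
      in_restr (surviving pi p q) tau -> EU pi p q i sigma = EU pi p q i tau).

Definition efficient (R : realFieldType) (N : nat) (pi : R) (q : 'I_N -> R)
  (sigma : profile N) : Prop :=
  forall tau, in_restr (@valid_restr N) tau -> prcorrect pi q tau <= prcorrect pi q sigma.

Definition nA (N : nat) (p : 'I_N -> pref) : nat :=
  #|[pred i | if p i is PA then true else false]|.
Definition nB (N : nat) (p : 'I_N -> pref) : nat :=
  #|[pred i | if p i is PB then true else false]|.
Definition nE (R : realFieldType) (N : nat) (p : 'I_N -> pref) (q : 'I_N -> R) : nat :=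
  #|[pred i | if p i is PI then q i == 1 else false]|.
Definition nU (R : realFieldType) (N : nat) (p : 'I_N -> pref) (q : 'I_N -> R) : nat :=
  #|[pred i | if p i is PI then q i < 1 else false]|.

(* Main.v *)
Require Import Defs.
From mathcomp Require Import all_boot all_order all_algebra.
From mathcomp Require Import zify ring lra.
From Stdlib Require Import Lia FunctionalExtensionality.
Set Implicit Arguments. Unset Strict Implicit. Unset Printing Implicit Defensive.
Import Order.TTheory GRing.Theory Num.Theory.
Local Open Scope ring_scope.

Lemma iterN_fix (N : nat) (f : 'I_N -> 'I_N) k z t :
  iter t f k = z -> f z = z -> iter N f k = z.
Proof.
move=> Ht Hz.
have C : fconnect f k z by rewrite -Ht; apply: fconnect_iter.
have H1 := iter_findex C.
have H2 := findex_max C.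
have H3 : (order f k <= N)%N by have := max_card (fconnect f k); rewrite card_ord.
have Hle : (findex f k z <= N)%N by apply: ltnW; apply: leq_trans H2 H3.
have E : forall n m x, (m <= n)%N -> iter n f x = iter (n - m) f (iter m f x).
  by move=> n m x Hmn; rewrite -iterD subnK.
by rewrite (E _ _ _ Hle) H1 iter_fix.
Qed.

Lemma fv_vote N (act : 'I_N -> action N) j v : act j = inl v -> final_vote act j = v.
Proof.
move=> H; rewrite /final_vote (@iterN_fix _ _ j j 0%N) ?H //.
by rewrite /dnext H.
Qed.

Lemma fv_deleg N (act : 'I_N -> action N) j m v :
  act j = inr m -> act m = inl v -> final_vote act j = v.
Proof.
move=> H1 H2; rewrite /final_vote (@iterN_fix _ _ j m 1%N) ?H2 //.
  by rewrite /= /dnext H1.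
by rewrite /dnext H2.
Qed.

Lemma fv_change N (act1 act2 : 'I_N -> action N) i z v t :
  (forall j, j != i -> act2 j = act1 j) ->
  iter t (dnext act2) i = z -> dnext act2 z = z -> act2 z = inl v ->
  forall k, final_vote act2 k = final_vote act1 k \/ final_vote act2 k = v.
Proof.
move=> Hoff Ht Hz Hv k.
case: (boolP [exists t' : 'I_N.+1, iter t' (dnext act2) k == i]).
  case/existsP=> t' /eqP Ht'; right.
  rewrite /final_vote (@iterN_fix _ _ k z (t + t')) ?Hv //.
  by rewrite iterD Ht' Ht.
move=> Hn; left.
have Hall : forall n, (n <= N)%N -> iter n (dnext act2) k != i.
  move=> n Hn'; apply/negP=> E; move/negP: Hn; apply; apply/existsP.
  by exists (Ordinal (Hn' : (n < N.+1)%N)).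
have Heq : forall n, (n <= N)%N -> iter n (dnext act2) k = iter n (dnext act1) k.
  elim=> [//|n IH] Hn'; rewrite !iterS -IH ?(ltnW Hn') //.
  by rewrite /dnext Hoff // Hall // ltnW.
rewrite /final_vote Heq // Hoff //.
by rewrite -Heq // Hall.
Qed.

Definition cnt N (act : 'I_N -> action N) (c : bool) : nat :=
  #|[pred k | final_vote act k == Some c]|.
Definition pA (R : realFieldType) (a b : nat) : R :=
  if (b < a)%N then 1 else if a == b then 2^-1 else 0.
Definition uc (R : realFieldType) (c : bool) (r : R) := if c then r else 1 - r.

Lemma probA_pA (R : realFieldType) N (act : 'I_N -> action N) :
  probA R act = pA R (cnt act true) (cnt act false).
Proof. by []. Qed.

Lemma half_bounds (R : realFieldType) : (0 : R) < 2^-1 /\ (2^-1 : R) < 1.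
Proof. split; first by rewrite invr_gt0 ltr0n. by rewrite invf_lt1 // ltr1n. Qed.

Lemma pA_bounds (R : realFieldType) a b : 0 <= pA R a b <= 1.
Proof.
have [h1 h2] := half_bounds R.
rewrite /pA; case: ifP => _; first by rewrite ler01 lexx.
case: ifP => _; last by rewrite lexx ler01.
by rewrite !ltW.
Qed.

Lemma pA_mono (R : realFieldType) a1 a2 b1 b2 :
  (a1 <= a2)%N -> (b2 <= b1)%N -> pA R a1 b1 <= pA R a2 b2.
Proof.
have [h1 h2] := half_bounds R.
move=> Ha Hb; rewrite /pA.
case: (ltnP b1 a1) => H1.
  by rewrite (leq_ltn_trans Hb (leq_trans H1 Ha)).
case: eqP => H2.
  case: (ltnP b2 a2) => H3; first by rewrite ltW.
  have -> : a2 == b2 by apply/eqP; apply/anti_leq; rewrite H3 /=; subst; lia.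
  by [].
case: ifP => _; first exact: ler01.
by case: ifP => _; [rewrite ltW | ].
Qed.

Lemma cnt_mono N (act1 act2 : 'I_N -> action N) c :
  (forall k, final_vote act2 k = final_vote act1 k \/ final_vote act2 k = Some c) ->
  (cnt act1 c <= cnt act2 c)%N /\ (cnt act2 (~~ c) <= cnt act1 (~~ c))%N.
Proof.
move=> H; split; apply: subset_leq_card; apply/subsetP => k; rewrite !inE /= => /eqP E.
  by case: (H k) => ->; rewrite ?E.
case: (H k) E => ->; first by move=> ->.
by case: c {H}.
Qed.

Lemma uc_mono (R : realFieldType) N (act1 act2 : 'I_N -> action N) c :
  (forall k, final_vote act2 k = final_vote act1 k \/ final_vote act2 k = Some c) ->
  uc c (probA R act1) <= uc c (probA R act2).
Proof.
move=> /cnt_mono [H1 H2]; rewrite !probA_pA /uc; case: c H1 H2 => /= H1 H2.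
  exact: pA_mono.
by apply: lerB => //; apply: pA_mono.
Qed.

Lemma uc_win (R : realFieldType) N (act : 'I_N -> action N) c :
  (cnt act (~~ c) < cnt act c)%N -> uc c (probA R act) = 1.
Proof.
rewrite probA_pA /uc /pA; case: c => /= H; first by rewrite H.
by rewrite ltnNge (ltnW H) /= (ltn_eqF H) subr0.
Qed.

Lemma uc_lose (R : realFieldType) N (act : 'I_N -> action N) c :
  (cnt act c <= cnt act (~~ c))%N -> uc c (probA R act) <= 2^-1.
Proof.
have [h1 h2] := half_bounds R.
rewrite probA_pA /uc /pA; case: c => /= H.
  by rewrite ltnNge H /=; case: ifP => _ //; rewrite ltW.
case: ltnP => H2.
  by rewrite subrr ltW.
have -> : cnt act true == cnt act false by rewrite eqn_leq H H2.
rewrite lerBlDl -lerBlDr.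
have -> : (1 : R) - 2^-1 = 2^-1.
  by rewrite {1}(splitr 1) mul1r addrK.
by [].
Qed.

Lemma uc_bounds (R : realFieldType) N (act : 'I_N -> action N) c :
  0 <= uc c (probA R act) <= 1.
Proof.
have /andP[h1 h2] := pA_bounds R (cnt act true) (cnt act false).
rewrite probA_pA /uc; case: c; first by rewrite h1 h2.
by rewrite subr_ge0 h2 lerBlDr lerDl h1.
Qed.

Definition weight (R : realFieldType) N (pi : R) (q : 'I_N -> R) w s :=
  prior pi w * sig_prob q w s.

Lemma sum_lt (R : realFieldType) (I : finType) (F G : I -> R) i0 :
  (forall i, F i <= G i) -> F i0 < G i0 -> \sum_i F i < \sum_i G i.
Proof.
move=> H H0; rewrite (bigD1 i0) //= [X in _ < X](bigD1 i0) //=.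
by apply: ltr_leD => //; apply: ler_sum => i _.
Qed.

Lemma exp_le (R : realFieldType) N (pi : R) q u (s1 s2 : profile N) :
  (forall w s, 0 <= weight pi q w s) ->
  (forall w s, weight pi q w s != 0 ->
     u w (probA R (act_of s1 s)) <= u w (probA R (act_of s2 s))) ->
  expected pi q u s1 <= expected pi q u s2.
Proof.
move=> H0 H; apply: ler_sum => w _; apply: ler_sum => s _.
have := H0 w s; rewrite /weight in H0 H *.
case: (eqVneq (prior pi w * sig_prob q w s) 0) => [->|Hn] _; first by rewrite !mul0r.
by apply: ler_wpM2l => //; apply: H.
Qed.

Lemma exp_lt (R : realFieldType) N (pi : R) q u (s1 s2 : profile N) w0 s0 :
  (forall w s, 0 <= weight pi q w s) ->
  (forall w s, weight pi q w s != 0 ->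
     u w (probA R (act_of s1 s)) <= u w (probA R (act_of s2 s))) ->
  0 < weight pi q w0 s0 ->
  u w0 (probA R (act_of s1 s0)) < u w0 (probA R (act_of s2 s0)) ->
  expected pi q u s1 < expected pi q u s2.
Proof.
move=> H0 H Hp Hs; rewrite /expected.
have Hle : forall w s, prior pi w * sig_prob q w s * u w (probA R (act_of s1 s)) <=
                       prior pi w * sig_prob q w s * u w (probA R (act_of s2 s)).
  move=> w s; have := H0 w s; rewrite /weight in H0 H *.
  case: (eqVneq (prior pi w * sig_prob q w s) 0) => [->|Hn] _; first by rewrite !mul0r.
  by apply: ler_wpM2l => //; apply: H.
apply: (sum_lt (i0 := w0)) => [w|]; first by apply: ler_sum => s _.
apply: (sum_lt (i0 := s0)); first by move=> s.
by move: Hp; rewrite /weight => Hp; rewrite ltr_pM2l.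
Qed.

Lemma weight_ge0 (R : realFieldType) N (pi : R) (q : 'I_N -> R) w (s : {ffun 'I_N -> bool}) :
  0 <= pi <= 1 -> (forall i, 0 <= q i <= 1) -> 0 <= weight pi q w s.
Proof.
move=> /andP[p0 p1] Hq; rewrite /weight; apply: mulr_ge0.
  by case: w => //=; rewrite subr_ge0.
apply: prodr_ge0 => i _; have /andP[a b] := Hq i.
by case: ifP => _ //; rewrite subr_ge0.
Qed.

Lemma weight_pos (R : realFieldType) N (pi : R) (q : 'I_N -> R) w (s : {ffun 'I_N -> bool}) :
  0 < pi < 1 -> (forall i, 0 < q i) -> (forall i, s i != w -> q i < 1) ->
  0 < weight pi q w s.
Proof.
move=> /andP[p0 p1] Hq Hq1; rewrite /weight; apply: mulr_gt0.
  by case: (w) => //=; rewrite subr_gt0.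
apply: prodr_gt0 => i _.
case: ifP => [_|/negbT H] //; by rewrite subr_gt0 Hq1.
Qed.

Lemma weight_expert (R : realFieldType) N (pi : R) (q : 'I_N -> R) w (s : {ffun 'I_N -> bool}) j :
  weight pi q w s != 0 -> q j = 1 -> s j = w.
Proof.
rewrite /weight mulf_eq0 negb_or => /andP[_ H] Hj.
case: (eqVneq (s j) w) => // Hne; move: H; rewrite /sig_prob.
case/prodf_eq0; exists j => //.
by rewrite (negbTE Hne) Hj subrr.
Qed.

Lemma weight_sum (R : realFieldType) N (pi : R) (q : 'I_N -> R) :
  \sum_w \sum_s weight pi q w s = 1.
Proof.
have Hs : forall w, \sum_(s : {ffun 'I_N -> bool}) sig_prob q w s = 1.
  move=> w; rewrite /sig_prob -(bigA_distr_bigA (fun (i : 'I_N) (j : bool) => if j == w then q i else 1 - q i)) /=.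
  rewrite (eq_bigr (fun _ => 1)) ?big1_eq // => i _.
  rewrite big_bool /=; case: w => /=; first by rewrite addrCA subrr addr0.
  by rewrite subrK.

rewrite big_bool /= /weight -!mulr_sumr !Hs !mulr1 /=.
by rewrite addrC subrK.
Qed.

Definition cside (x : pref) (w : bool) : bool :=
  match x with PA => true | PB => false | PI => w end.

Lemma utility_uc (R : realFieldType) x w (r : R) : utility x w r = uc (cside x w) r.
Proof. by case: x. Qed.

Section Main.
Variables (R : realFieldType) (N : nat) (pi : R) (p : 'I_N -> pref) (q : 'I_N -> R).
Hypothesis Hpi : 0 < pi < 1.
Hypothesis Hq : forall i, 2^-1 <= q i <= 1.
Variable e0 : 'I_N.
Hypothesis He0p : p e0 = PI.
Hypothesis He0q : q e0 = 1.
Hypothesis Hthree : forall i : 'I_N, exists k : 'I_N, k != i /\ k != e0.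

Definition isU i := if p i is PI then q i < 1 else false.
Definition vote_of (x : pref) : strat N := [ffun s => inl (Some (cside x s))].
Definition dlg (e : 'I_N) : strat N := [ffun _ => inr e].
Definition K i : strat N := if isU i then dlg e0 else vote_of (p i).
Definition vsig := vote_of PI.

Lemma q_pos i : 0 < q i.
Proof.
have /andP[h _] := Hq i; apply: lt_le_trans h.
by rewrite invr_gt0 ltr0n.
Qed.

Lemma q01 i : 0 <= q i <= 1.
Proof. by have /andP[_ ->] := Hq i; rewrite ltW // q_pos. Qed.

Lemma wge0 w s : 0 <= weight pi q w s.
Proof. by apply: weight_ge0 => //; [case/andP: Hpi => a b; rewrite !ltW | exact: q01]. Qed.

Lemma nonU_q i : ~~ isU i -> p i = PI -> q i = 1.
Proof.
rewrite /isU => H Hp; move: H; rewrite Hp -leNgt => H.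
by apply/le_anti; rewrite H; have /andP[_ ->] := Hq i.
Qed.

Lemma U_ne_e0 i : isU i -> i != e0.
Proof.
rewrite /isU; case: (p i) => // H; apply/eqP => E; subst.
by rewrite He0q ltxx in H.
Qed.

Lemma e0_nonU : ~~ isU e0.
Proof. by rewrite /isU He0p He0q ltxx. Qed.

Lemma K_e0 : K e0 = vsig.
Proof. by rewrite /K (negbTE e0_nonU) He0p. Qed.

Lemma K_vote i w (s : {ffun 'I_N -> bool}) : ~~ isU i -> weight pi q w s != 0 ->
  K i (s i) = inl (Some (cside (p i) w)).
Proof.
move=> HU Hw; rewrite /K (negbTE HU) /vote_of ffunE.
case E: (p i) => //=.
by rewrite (weight_expert Hw (nonU_q HU E)).
Qed.

Lemma act_upd (sigma : profile N) i y s j :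
  act_of (upd sigma i y) s j = if j == i then y (s i) else sigma j (s j).
Proof. by rewrite /act_of /upd; case: eqP => // ->. Qed.

Lemma K_real_le i (sigma : profile N) y w s :
  (isU i -> sigma e0 = vsig) -> weight pi q w s != 0 ->
  utility (p i) w (probA R (act_of (upd sigma i y) s)) <=
  utility (p i) w (probA R (act_of (upd sigma i (K i)) s)).
Proof.
move=> He Hw; rewrite !utility_uc; apply: uc_mono.
have Hoff : forall j, j != i -> act_of (upd sigma i (K i)) s j = act_of (upd sigma i y) s j.
  by move=> j Hj; rewrite !act_upd (negbTE Hj).
case HU: (isU i).
  have Hp : p i = PI by move: HU; rewrite /isU; case: (p i).
  have Hne := U_ne_e0 HU.
  have Ha0 : act_of (upd sigma i (K i)) s e0 = inl (Some w).
    rewrite act_upd eq_sym (negbTE Hne) (He HU) /vsig /vote_of ffunE /=.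
    by rewrite (weight_expert Hw He0q).
  have Ha1 : act_of (upd sigma i (K i)) s i = inr e0 by rewrite act_upd eqxx /K HU ffunE.
  rewrite Hp /=.
  apply: (fv_change (i := i) (z := e0) (t := 1%N)) => //.
    by rewrite /= /dnext Ha1.
  by rewrite /dnext Ha0.
have Ha : act_of (upd sigma i (K i)) s i = inl (Some (cside (p i) w)).
  by rewrite act_upd eqxx (@K_vote i w s) // HU.
apply: (fv_change (i := i) (z := i) (t := 0%N)) => //.
by rewrite /dnext Ha.
Qed.

Lemma K_opt i (sigma : profile N) y :
  (isU i -> sigma e0 = vsig) ->
  EU pi p q i (upd sigma i y) <= EU pi p q i (upd sigma i (K i)).
Proof.
move=> He; apply: exp_le; first exact: wge0.
by move=> w s Hw; apply: K_real_le.
Qed.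


Lemma cnt0 (act : 'I_N -> action N) c :
  (forall k, final_vote act k != Some c) -> cnt act c = 0%N.
Proof. by move=> H; apply: eq_card0 => k; rewrite !inE /= (negbTE (H k)). Qed.

Lemma ffun_neq (y z : strat N) : y != z -> exists s', y s' != z s'.
Proof.
move=> Hne; case/boolP: (y true == z true) => [/eqP Ht|]; last by exists true.
case/boolP: (y false == z false) => [/eqP Hf|]; last by exists false.
have E : y = z by apply/ffunP => -[].
by rewrite E eqxx in Hne.
Qed.

Definition sab : profile N := fun _ => [ffun _ => inl None].

Lemma sab_valid : in_restr (@valid_restr N) sab.
Proof. by move=> j s j'; rewrite /sab ffunE. Qed.

Lemma half_lt1 : (2^-1 : R) < 1.
Proof. by case: (half_bounds R). Qed.

Lemma vote_strict i y : ~~ isU i -> valid_strat i y -> y != K i ->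
  exists sigma, in_restr (@valid_restr N) sigma /\
    EU pi p q i (upd sigma i y) < EU pi p q i (upd sigma i (K i)).
Proof.
move=> HU Hy Hne; have [s' Hs'] := ffun_neq Hne.
exists sab; split; first exact: sab_valid.
pose s0 := [ffun _ : 'I_N => s'].
have Hpos : 0 < weight pi q s' s0.
  by apply: weight_pos => // [|j]; [exact: q_pos | rewrite ffunE eqxx].
have Hw : weight pi q s' s0 != 0 by rewrite gt_eqF.
apply: (exp_lt (w0 := s') (s0 := s0)) => //; first exact: wge0.
  by move=> w s Hw'; apply: K_real_le => // H; rewrite H in HU.
rewrite !utility_uc; set c := cside (p i) s'.
have HK : K i s' = inl (Some c) by have := K_vote HU Hw; rewrite ffunE.
apply: (le_lt_trans (y := 2^-1)); last (rewrite uc_win ?half_lt1 //).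
  apply: uc_lose; rewrite cnt0 // => k.
  case: (eqVneq k i) => [->|Hk].
    case E: (y s') => [v|j].
      rewrite (@fv_vote _ _ _ v); last by rewrite act_upd eqxx ffunE E.
      by apply: contra Hs' => /eqP Ev; rewrite E HK Ev.
    have Hj : j != i by apply: (Hy s').
    rewrite (@fv_deleg _ _ _ j None) //; first by rewrite act_upd eqxx ffunE E.
    by rewrite act_upd (negbTE Hj) /sab ffunE.
  by rewrite (@fv_vote _ _ _ None) // act_upd (negbTE Hk) /sab ffunE.
have Hfi : final_vote (act_of (upd sab i (K i)) s0) i = Some c.
  by apply: fv_vote; rewrite act_upd eqxx ffunE HK.
rewrite (@cnt0 _ (~~ c)).
  apply/card_gt0P; exists i; by rewrite !inE /= Hfi.
move=> k; case: (eqVneq k i) => [->|Hk]; first by rewrite Hfi; case: (c).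
by rewrite (@fv_vote _ _ _ None) // act_upd (negbTE Hk) /sab ffunE.
Qed.


Lemma isU_q i : isU i -> q i < 1.
Proof. by rewrite /isU; case: (p i). Qed.

Lemma isU_p i : isU i -> p i = PI.
Proof. by rewrite /isU; case: (p i). Qed.

Lemma U_strict i y : isU i -> valid_strat i y -> y != K i ->
  exists sigma, in_restr (@valid_restr N) sigma /\
    EU pi p q i (upd sigma i y) < EU pi p q i (upd sigma i (K i)).
Proof.
move=> HU Hy Hne; have [s' Hs'] := ffun_neq Hne.
have HKi : K i = dlg e0 by rewrite /K HU.
rewrite HKi /dlg ffunE in Hs'.
have [k [Hki Hke]] := Hthree i.
have ie0 := U_ne_e0 HU.
pose c := if y s' == inl (Some false) then false else true.
pose w := ~~ c.
pose sg : profile N := fun j => if j == e0 then vsig else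
   if j == k then [ffun _ => inl (Some c)] else [ffun _ => inl None].
exists sg; split.
  move=> j s j'; rewrite /sg; case: ifP => _; first by rewrite /vsig /vote_of ffunE.
  by case: ifP => _; rewrite ffunE.
pose s0 := [ffun j => if j == i then s' else w].
have Hpos : 0 < weight pi q w s0.
  apply: weight_pos => // [|j]; first exact: q_pos.
  rewrite ffunE; case: ifP => [/eqP -> _|]; first exact: isU_q.
  by rewrite eqxx.
have Hw : weight pi q w s0 != 0 by rewrite gt_eqF.
apply: (exp_lt (w0 := w) (s0 := s0)) => //; first exact: wge0.
  by move=> w' s Hw'; apply: K_real_le => // _; rewrite /sg eqxx.
rewrite !utility_uc (isU_p HU) /=.
have Hoth : forall Y j, j != i -> final_vote (act_of (upd sg i Y) s0) j =
    (if j == e0 then Some w else if j == k then Some c else None).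
  move=> Y j Hj; apply: fv_vote; rewrite act_upd (negbTE Hj) /sg.
  case: ifP => [/eqP ->|_]; first by rewrite /vsig /vote_of ffunE /= ffunE eq_sym (negbTE ie0).
  by case: ifP => _; rewrite ffunE.
have Hcw : c != w by rewrite /w; case: (c).
have Hwc : w != c by rewrite eq_sym.
apply: (le_lt_trans (y := 2^-1)).
  apply: uc_lose.
  have Hfi : final_vote (act_of (upd sg i y) s0) i = Some c \/
             final_vote (act_of (upd sg i y) s0) i = None.
    case E: (y s') => [v|j].
      rewrite (@fv_vote _ _ _ v); last by rewrite act_upd eqxx ffunE eqxx E.
      move: E; rewrite /c; case: v => [[]|] E; rewrite E //=; by [right | left].
    have Hj : j != i by apply: (Hy s').
    have Hje : j != e0 by apply: contra Hs' => /eqP <-; rewrite E.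
    have Ha : act_of (upd sg i y) s0 i = inr j by rewrite act_upd eqxx ffunE eqxx E.
    case: (eqVneq j k) => [Ejk|Hjk].
      left; apply: (fv_deleg Ha); rewrite act_upd (negbTE Hj) /sg (negbTE Hje) Ejk eqxx ffunE //.
    right; apply: (fv_deleg Ha); rewrite act_upd (negbTE Hj) /sg (negbTE Hje) (negbTE Hjk) ffunE //.
  apply: (@leq_trans 1%N).
    rewrite -(cards1 e0); apply: subset_leq_card; apply/subsetP => j; rewrite !inE /=.
    case: (eqVneq j i) => [->|Hj].
      by case: Hfi => -> //=; rewrite (inj_eq (@Some_inj _)) (negbTE Hcw).
    rewrite Hoth //; case: ifP => // _; case: ifP => _ //.
    by rewrite (inj_eq (@Some_inj _)) (negbTE Hcw).
  apply/card_gt0P; exists k; rewrite !inE /= Hoth // (negbTE Hke) eqxx /w negbK //.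
rewrite uc_win ?half_lt1 //.
have Hfi : final_vote (act_of (upd sg i (K i)) s0) i = Some w.
  apply: (@fv_deleg _ _ _ e0); first by rewrite act_upd eqxx HKi ffunE.
  rewrite act_upd eq_sym (negbTE ie0) /sg eqxx /vsig /vote_of ffunE /= ffunE.
  by rewrite eq_sym (negbTE ie0).
apply: (@leq_ltn_trans 1%N).
  rewrite -(cards1 k); apply: subset_leq_card; apply/subsetP => j; rewrite !inE /=.
  case: (eqVneq j i) => [->|Hj].
    by rewrite Hfi /w (inj_eq (@Some_inj _)); case: (c).
  rewrite Hoth //; case: ifP => _.
    by rewrite /w (inj_eq (@Some_inj _)); case: (c).
  by case: ifP.
have -> : 1%N.+1 = #|[set i; e0]| by rewrite cards2 ie0.
apply: subset_leq_card; apply/subsetP => j; rewrite !inE /=.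
case/orP => /eqP ->; first by rewrite Hfi.
by rewrite Hoth 1?eq_sym // eqxx.
Qed.


Definition S k := iter k (elim_step pi p q) (@valid_restr N).

Lemma S_sub1 k i x : S k.+1 i x -> S 1 i x.
Proof. elim: k => [//|k IH] H; apply: IH; exact: H.1. Qed.

Lemma K_valid i : valid_strat i (K i).
Proof.
rewrite /K; case: ifP => HU s j; rewrite ffunE //.
by case=> <-; rewrite eq_sym U_ne_e0.
Qed.

Lemma S1_nonU i x : ~~ isU i -> S 1 i x -> x = K i.
Proof.
move=> HU [Hv Hnd]; case: (eqVneq x (K i)) => // Hne; exfalso; apply: Hnd.
exists (K i); split; first exact: K_valid.
split; first by move=> sg _; apply: K_opt => H; rewrite H in HU.
exact: vote_strict.
Qed.

Lemma S1_e0 k (sg : profile N) : in_restr (S k.+1) sg -> sg e0 = vsig.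
Proof. by move=> H; rewrite -K_e0; apply: S1_nonU e0_nonU _; apply: S_sub1 (H e0). Qed.

Lemma K_in_S k i : S k i (K i).
Proof.
elim: k i => [|k IH] i; first exact: K_valid.
split; first exact: IH.
move=> [y [Sy [Hle [sg [Hsg Hlt]]]]].
case: k IH Sy Hle Hsg Hlt => [|k] IH Sy Hle Hsg Hlt.
  case HU: (isU i).
    case: (eqVneq y (K i)) => [E|Hne]; first by rewrite E ltxx in Hlt.
    have [sg' [Hv Hlt']] := U_strict HU Sy Hne.
    by have := Hle sg' Hv; rewrite leNgt Hlt'.
  have Hi : isU i -> sg e0 = vsig by rewrite HU.
  by have := @K_opt i sg y Hi; rewrite leNgt Hlt.
have := @K_opt i sg y (fun _ => S1_e0 Hsg).
by rewrite leNgt Hlt.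
Qed.

Definition survS (x : profile N) := forall j k, S k j (x j).

Lemma surv_eq i x (tau : profile N) : (forall k, S k i x) -> in_restr (S 1) tau ->
  EU pi p q i (upd tau i x) = EU pi p q i (upd tau i (K i)).
Proof.
move=> Hx Ht; have [_ Hnd] := Hx 2%N.
apply/le_anti/andP; split; first by apply: K_opt => _; apply: (S1_e0 Ht).
rewrite leNgt; apply/negP => Hlt; apply: Hnd.
exists (K i); split; first exact: (K_in_S 1).
split; last by exists tau.
by move=> tau' Ht'; apply: K_opt => _; apply: (@S1_e0 0 tau' Ht').
Qed.

Definition profK : profile N := fun j => K j.
Definition mix (sg : profile N) m : profile N := fun j => if (j < m)%N then K j else sg j.

Lemma EU_PI i (tau : profile N) : p i = PI -> EU pi p q i tau = prcorrect pi q tau.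
Proof. by rewrite /EU /prcorrect => ->. Qed.

Lemma prc_mix sg : survS sg -> forall m, (m <= N)%N ->
  prcorrect pi q (mix sg m) = prcorrect pi q sg.
Proof.
move=> Hs; elim=> [_|m IH Hm].
  have -> : mix sg 0 = sg by apply: functional_extensionality => j.
  by [].
pose im := Ordinal Hm.
have H1 : mix sg m.+1 = upd (mix sg m) im (K im).
  apply: functional_extensionality => j; rewrite /mix /upd.
  case: eqVneq => [->|Hj] /=; first by rewrite ltnSn.
  rewrite ltnS leq_eqVlt.
  have -> : (nat_of_ord j == m) = false by apply/negbTE; apply: contra Hj => /eqP E; apply/eqP/val_inj.
  by [].
have H2 : mix sg m = upd (mix sg m) im (sg im).
  apply: functional_extensionality => j; rewrite /mix /upd.
  by case: eqVneq => [->|_] //=; rewrite ltnn.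
have Hin : in_restr (S 1) (mix sg m).
  by move=> j; rewrite /mix; case: ifP => _; [exact: (K_in_S 1 j) | exact: (Hs j 1%N)].
rewrite H1 -IH; last exact: ltnW.
case HU: (isU im).
  rewrite -!(EU_PI _ (isU_p HU)) -(surv_eq (Hs im) Hin).
  by rewrite -H2.
have -> : K im = sg im by symmetry; apply: S1_nonU; [rewrite HU | exact: (Hs im 1%N)].
by rewrite -H2.
Qed.

Lemma mixN sg : mix sg N = profK.
Proof. by apply: functional_extensionality => j; rewrite /mix ltn_ord. Qed.

Lemma prc_le1 tau : prcorrect pi q tau <= 1.
Proof.
rewrite -(weight_sum pi q); apply: ler_sum => w _; apply: ler_sum => s _.
rewrite /weight; apply: ler_piMr; first exact: (wge0 w s).
by have /andP[] := uc_bounds R (act_of tau s) w.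
Qed.

Lemma prc1_outcome sg : prcorrect pi q sg = 1 -> forall w s, weight pi q w s != 0 ->
  probA R (act_of sg s) = if w then 1 else 0.
Proof.
move=> H w s Hw.
pose D w s := weight pi q w s - weight pi q w s * utility PI w (probA R (act_of sg s)).
have D0 : forall w s, 0 <= D w s.
  move=> w' s'; rewrite /D subr_ge0; apply: ler_piMr; first exact: wge0.
  by have /andP[] := uc_bounds R (act_of sg s') w'.
have Hsum : \sum_w \sum_s D w s = 0.
  rewrite /D; under eq_bigr => w' _ do rewrite sumrB.
  by rewrite sumrB weight_sum; move: H; rewrite /prcorrect /expected /weight => ->; rewrite subrr.
have Hw0 : \sum_s D w s = 0 := psumr_eq0P (fun w' _ => sumr_ge0 _ (fun s' _ => D0 w' s')) Hsum isT.
have : D w s = 0 := psumr_eq0P (fun s' _ => D0 w s') Hw0 isT.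
rewrite /D -{1}(mulr1 (weight pi q w s)) -mulrBr => /eqP; rewrite mulf_eq0 (negbTE Hw) /=.
rewrite subr_eq0 => /eqP; rewrite /uc; case: w {Hw Hw0} => //= E.
by move: E; set x := probA R _ => E; lra.
Qed.

Lemma EU_of_prc1 i sg : prcorrect pi q sg = 1 ->
  EU pi p q i sg = \sum_w \sum_s weight pi q w s * utility (p i) w (if w then 1 else 0).
Proof.
move=> H; apply: eq_bigr => w _; apply: eq_bigr => s _.
case: (eqVneq (weight pi q w s) 0) => [E|Hw].
  by move: E; rewrite /weight => ->; rewrite !mul0r.
by rewrite (prc1_outcome H Hw).
Qed.

Hypothesis HnA : (2 * nA p < N)%N.
Hypothesis HnB : (2 * nB p < N)%N.

Lemma final_K w (s : {ffun 'I_N -> bool}) : weight pi q w s != 0 ->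
  forall j, final_vote (act_of profK s) j = Some (cside (p j) w).
Proof.
move=> Hw j; rewrite /act_of /profK.
case HU: (isU j).
  apply: (@fv_deleg _ _ _ e0); first by rewrite /K HU ffunE.
  by rewrite (K_vote e0_nonU Hw) He0p (isU_p HU).
by apply: fv_vote; rewrite (K_vote _ Hw) // HU.
Qed.

Lemma prcK : prcorrect pi q profK = 1.
Proof.
rewrite -(weight_sum pi q); apply: eq_bigr => w _; apply: eq_bigr => s _.
case: (eqVneq (weight pi q w s) 0) => [E|Hw].
  by move: E; rewrite /weight => ->; rewrite !mul0r.
rewrite utility_uc /= uc_win ?mulr1 //.
pose A := [pred j | cside (p j) w == ~~ w].
have Hc : forall c, cnt (act_of profK s) c = #|[pred j | cside (p j) w == c]|.
  by move=> c; apply: eq_card => j; rewrite !inE /= (final_K Hw) (inj_eq (@Some_inj _)).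
rewrite !Hc.
have HC := cardC A; rewrite card_ord in HC.
have -> : #|[pred j | cside (p j) w == w]| = #|[predC A]|.
  by apply: eq_card => j; rewrite !inE /=; case: (cside (p j) w); case: (w).
have HA : (#|A| <= if w then nB p else nA p)%N.
  rewrite /A; case: (w); apply: subset_leq_card; apply/subsetP => j; rewrite !inE /=;
  by case: (p j).
have Hx : (2 * (if w then nB p else nA p) < N)%N by case: (w).
rewrite -/A; move: HA Hx HC; set a := #|A|; set b := #|[predC A]|; set x := (if w then _ else _).
move=> *; lia.
Qed.

End Main.

Theorem proposition5 (R : realFieldType) (N : nat) (pi : R)
  (p : 'I_N -> pref) (q : 'I_N -> R) :
  0 < pi < 1 ->
  (forall i, 2^-1 <= q i <= 1) ->
  (1 <= nE p q)%N ->
  (nE p q + ((nA p - nB p) + (nB p - nA p)) + 1 <= nU p q)%N ->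
  (2 * maxn (nE p q + nA p) (nE p q + nB p) <= N)%N ->
  dominance_solvable pi p q /\
  (forall sigma, in_restr (surviving pi p q) sigma -> efficient pi q sigma).
Proof.
move=> Hpi Hq HnE HnU Hmax.
have [e0 He0] : exists e0, e0 \in [pred i | if p i is PI then q i == 1 else false].
  by apply/card_gt0P.
have He0p : p e0 = PI by move: He0; rewrite inE /=; case: (p e0).
have He0q : q e0 = 1 by move: He0; rewrite inE /= He0p => /eqP.
have Hthree : forall i : 'I_N, exists k : 'I_N, k != i /\ k != e0.
  move=> i.
  have HU2 : (2 <= nU p q)%N by lia.
  have : (0 < #|[predD1 [pred j | if p j is PI then (q j < 1)%R else false] & i]|)%N.
    move: HU2; rewrite /nU (cardD1 i); set b := (i \in _); set n := #|_|.
    by case: b => /=; lia.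
  case/card_gt0P => k; rewrite !inE /= => /andP[Hki Hk].
  exists k; split => //; apply/eqP => E; move: Hk; rewrite E He0p He0q.
  by rewrite ltxx.
have HnA : (2 * nA p < N)%N.
  have := leq_maxl (nE p q + nA p) (nE p q + nB p); lia.
have HnB : (2 * nB p < N)%N.
  have := leq_maxr (nE p q + nA p) (nE p q + nB p); lia.
have prc1 : forall sg, in_restr (surviving pi p q) sg -> prcorrect pi q sg = 1.
  move=> sg Hs.
  have Hs' : survS pi p q sg by move=> j k; apply: Hs.
  rewrite -(prc_mix Hpi Hq He0p He0q Hthree Hs' (leqnn N)) mixN.
  exact: (prcK Hpi Hq He0p He0q HnA HnB).
split.
  split.
    exists (profK p q e0) => j k.
    exact: (K_in_S Hpi Hq He0p He0q Hthree k j).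
  move=> i sg tau Hs Ht.
  by rewrite (EU_of_prc1 p Hpi Hq i (prc1 _ Hs)) (EU_of_prc1 p Hpi Hq i (prc1 _ Ht)).
move=> sg Hs tau _; rewrite (prc1 _ Hs).
exact: (prc_le1 Hpi Hq).
Qed.
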